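(* Let $S$ be a three-level system with Hamiltonian $H_S=\sum_{i=0}^2E_i|i\rangle\langle i|$ where $E_2-E_1=E_1-E_0=\Delta E>0$. Let $\rho$ be a state with $\langle1|\rho|2\rangle=0$, and let $\mathcal{T}$ be any Thermal Operation on $S$. Then $$|\langle1|\mathcal{T}(\rho)|2\rangle|\le e^{-\beta\Delta E}\,|\langle0|\rho|1\rangle|.$$
   Context: $\beta>0$. A Thermal Operation on $S$ is a channel $\mathcal{T}(\rho)=\mathrm{tr}_B[U(\rho\otimes\gamma_B)U^\dagger]$ with $B$ any finite-dimensional system, $H_B$ any Hamiltonian, $\gamma_B=e^{-\beta H_B}/\mathrm{tr}\,e^{-\beta H_B}$, and $U$ unitary with $[U,H_S\otimes\mathbb{I}+\mathbb{I}\otimes H_B]=0$. *)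

(* Defs.v *)
From Stdlib Require Import Reals.
Open Scope R_scope.

Definition C : Type := (R * R)%type.
Definition RC (r : R) : C := (r, 0).
Definition C0 : C := RC 0.
Definition C1 : C := RC 1.
Definition Cadd (z w : C) : C := (fst z + fst w, snd z + snd w).
Definition Cmul (z w : C) : C :=
  (fst z * fst w - snd z * snd w, fst z * snd w + snd z * fst w).
Definition Cconj (z : C) : C := (fst z, - snd z).
Definition Cmod (z : C) : R := sqrt (fst z ^ 2 + snd z ^ 2).

Fixpoint csum (n : nat) (f : nat -> C) : C :=
  match n with O => C0 | S m => Cadd (csum m f) (f m) end.
Fixpoint rsum (n : nat) (f : nat -> R) : R :=
  match n with O => 0 | S m => rsum m f + f m end.

(** Matrices on C^n: entries A i j = <i|A|j> (0-indexed); only i,j < n matter. *)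
Definition Mat : Type := nat -> nat -> C.
Definition mat_eq (n : nat) (A B : Mat) : Prop :=
  forall i j, (i < n)%nat -> (j < n)%nat -> A i j = B i j.
Definition mmul (n : nat) (A B : Mat) : Mat :=
  fun i j => csum n (fun k => Cmul (A i k) (B k j)).
Definition adj (A : Mat) : Mat := fun i j => Cconj (A j i).
Definition delta (i j : nat) : C := if Nat.eqb i j then C1 else C0.
Definition diag (v : nat -> C) : Mat := fun i j => if Nat.eqb i j then v i else C0.
Definition trace (n : nat) (A : Mat) : C := csum n (fun i => A i i).
Definition unitary (n : nat) (U : Mat) : Prop :=
  mat_eq n (mmul n U (adj U)) delta /\ mat_eq n (mmul n (adj U) U) delta.
Definition hermitian (n : nat) (A : Mat) : Prop := mat_eq n (adj A) A.
Definition psd (n : nat) (A : Mat) : Prop :=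
  hermitian n A /\
  forall v : nat -> C,
    0 <= fst (csum n (fun i => Cmul (Cconj (v i))
                                    (csum n (fun j => Cmul (A i j) (v j))))).
Definition density (n : nat) (rho : Mat) : Prop := psd n rho /\ trace n rho = C1.

(** Gibbs state gamma = e^{-beta H}/tr e^{-beta H} of a Hermitian H on C^d,
    via the functional calculus: H = V diag(eps) V^dagger with V unitary, eps real,
    and gamma = V diag(e^{-beta eps_k}/Z) V^dagger, Z = sum_k e^{-beta eps_k}. *)
Definition gibbs_state (d : nat) (beta : R) (H gamma : Mat) : Prop :=
  exists (V : Mat) (eps : nat -> R),
    unitary d V /\
    mat_eq d H (mmul d (mmul d V (diag (fun k => RC (eps k)))) (adj V)) /\
    mat_eq d gamma
      (mmul d (mmul d V
         (diag (fun k => RC (exp (- beta * eps k) /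
                             rsum d (fun l => exp (- beta * eps l)))))) (adj V)).

(** Operators on the composite system S (x) B, dims dS, dB:
    M i b j b' = <i,b| M |j,b'>. *)
Definition Op2 : Type := nat -> nat -> nat -> nat -> C.
Definition op2_eq (dS dB : nat) (A B : Op2) : Prop :=
  forall i b j b', (i < dS)%nat -> (b < dB)%nat -> (j < dS)%nat -> (b' < dB)%nat ->
    A i b j b' = B i b j b'.
Definition mmul2 (dS dB : nat) (A B : Op2) : Op2 :=
  fun i b j b' => csum dS (fun k => csum dB (fun c => Cmul (A i b k c) (B k c j b'))).
Definition adj2 (A : Op2) : Op2 := fun i b j b' => Cconj (A j b' i b).
Definition delta2 : Op2 := fun i b j b' => Cmul (delta i j) (delta b b').
Definition unitary2 (dS dB : nat) (U : Op2) : Prop :=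
  op2_eq dS dB (mmul2 dS dB U (adj2 U)) delta2 /\
  op2_eq dS dB (mmul2 dS dB (adj2 U) U) delta2.
Definition tensor (A B : Mat) : Op2 := fun i b j b' => Cmul (A i j) (B b b').
Definition Htot (HS HB : Mat) : Op2 :=
  fun i b j b' => Cadd (Cmul (HS i j) (delta b b')) (Cmul (delta i j) (HB b b')).
Definition ptraceB (dB : nat) (M : Op2) : Mat :=
  fun i j => csum dB (fun b => M i b j b).

Definition thermal_operation (dS : nat) (beta : R) (HS : Mat) (T : Mat -> Mat) : Prop :=
  exists (dB : nat) (HB gammaB : Mat) (U : Op2),
    (0 < dB)%nat /\
    hermitian dB HB /\
    gibbs_state dB beta HB gammaB /\
    unitary2 dS dB U /\
    op2_eq dS dB (mmul2 dS dB U (Htot HS HB)) (mmul2 dS dB (Htot HS HB) U) /\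
    forall rho : Mat,
      mat_eq dS (T rho)
        (ptraceB dB (mmul2 dS dB (mmul2 dS dB U (tensor rho gammaB)) (adj2 U))).

Definition H3 (E0 E1 E2 : R) : Mat :=
  diag (fun i => RC (match i with O => E0 | S O => E1 | _ => E2 end)).

(* Main.v *)
From Stdlib Require Import Reals Lra Lia Psatz Setoid Morphisms.
Require Import Defs.
From Coquelicot Require Complex.
Open Scope R_scope.

Definition Copp (z : C) : C := (- fst z, - snd z).
Definition Csub (z w : C) : C := Cadd z (Copp w).

Lemma Cring : ring_theory C0 C1 Cadd Cmul Csub Copp eq.
Proof.
  constructor; intros;
  repeat match goal with z : C |- _ => destruct z end;
  unfold Csub, Copp, Cadd, Cmul, C0, C1, RC; simpl; f_equal; ring.
Qed.
Add Ring Cring : Cring.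

Lemma Cmod_triangle (x y : C) : Cmod (Cadd x y) <= Cmod x + Cmod y.
Proof. exact (Complex.Cmod_triangle x y). Qed.
Lemma Cmod_mult (x y : C) : Cmod (Cmul x y) = Cmod x * Cmod y.
Proof. exact (Complex.Cmod_mult x y). Qed.
Lemma Cmod_conj (x : C) : Cmod (Cconj x) = Cmod x.
Proof. exact (Complex.Cmod_conj x). Qed.
Lemma Cmod_ge_0 (x : C) : 0 <= Cmod x.
Proof. exact (Complex.Cmod_ge_0 x). Qed.


Lemma Cpair_eq (z : C) : z = (fst z, snd z).
Proof. destruct z; reflexivity. Qed.

Lemma csum_ext n f g : (forall k, (k < n)%nat -> f k = g k) -> csum n f = csum n g.
Proof.
  induction n; intros H; simpl; auto.
  rewrite IHn by (intros; apply H; lia). rewrite H by lia. reflexivity.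
Qed.

Lemma csum_add n f g : csum n (fun k => Cadd (f k) (g k)) = Cadd (csum n f) (csum n g).
Proof. induction n; simpl. - ring. - rewrite IHn. ring. Qed.

Lemma csum_mul_l n a f : csum n (fun k => Cmul a (f k)) = Cmul a (csum n f).
Proof. induction n; simpl. - ring. - rewrite IHn. ring. Qed.

Lemma csum_mul_r n a f : csum n (fun k => Cmul (f k) a) = Cmul (csum n f) a.
Proof. induction n; simpl. - ring. - rewrite IHn. ring. Qed.

Lemma csum_zero n f : (forall k, (k < n)%nat -> f k = C0) -> csum n f = C0.
Proof.
  induction n; intros H; simpl; auto.
  rewrite IHn by (intros; apply H; lia). rewrite H by lia. ring.
Qed.

Lemma csum_swap n m (f : nat -> nat -> C) :
  csum n (fun i => csum m (fun j => f i j)) = csum m (fun j => csum n (fun i => f i j)).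
Proof.
  induction n; simpl.
  - symmetry. apply csum_zero. auto.
  - rewrite IHn. rewrite <- csum_add. reflexivity.
Qed.

Lemma csum_single n f i : (i < n)%nat ->
  (forall k, (k < n)%nat -> k <> i -> f k = C0) -> csum n f = f i.
Proof.
  induction n; intros Hi H; [lia|]. simpl.
  destruct (Nat.eq_dec i n) as [->|Hne].
  - rewrite csum_zero by (intros; apply H; lia). ring.
  - rewrite IHn by (intros; try apply H; lia). rewrite (H n) by lia. ring.
Qed.

Lemma csum_conj n f : Cconj (csum n f) = csum n (fun k => Cconj (f k)).
Proof.
  induction n; simpl.
  - unfold Cconj, C0, RC; simpl. f_equal. ring.
  - rewrite <- IHn. destruct (csum n f), (f n). unfold Cconj, Cadd; simpl. f_equal. ring.
Qed.

Lemma fst_csum n f : fst (csum n f) = rsum n (fun k => fst (f k)).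
Proof. induction n; simpl; auto. rewrite IHn. reflexivity. Qed.

Lemma rsum_ext n f g : (forall k, (k < n)%nat -> f k = g k) -> rsum n f = rsum n g.
Proof.
  induction n; intros H; simpl; auto.
  rewrite IHn by (intros; apply H; lia). rewrite H by lia. reflexivity.
Qed.

Lemma rsum_le n f g : (forall k, (k < n)%nat -> f k <= g k) -> rsum n f <= rsum n g.
Proof.
  induction n; intros H; simpl; [lra|].
  pose proof (IHn (fun k Hk => H k ltac:(lia))). pose proof (H n ltac:(lia)). lra.
Qed.

Lemma rsum_add n f g : rsum n (fun k => f k + g k) = rsum n f + rsum n g.
Proof. induction n; simpl. - ring. - rewrite IHn. ring. Qed.

Lemma rsum_scal n a f : rsum n (fun k => a * f k) = a * rsum n f.
Proof. induction n; simpl. - ring. - rewrite IHn. ring. Qed.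

Lemma rsum_nonneg n f : (forall k, (k < n)%nat -> 0 <= f k) -> 0 <= rsum n f.
Proof.
  intros H. apply Rle_trans with (rsum n (fun _ => 0)).
  - clear H; induction n; simpl; lra.
  - apply rsum_le. auto.
Qed.

Lemma rsum_pos n f : (0 < n)%nat -> (forall k, (k < n)%nat -> 0 < f k) -> 0 < rsum n f.
Proof.
  destruct n; intros Hn H; [lia|]. simpl.
  pose proof (rsum_nonneg n f (fun k Hk => Rlt_le _ _ (H k ltac:(lia)))).
  pose proof (H n ltac:(lia)). lra.
Qed.

Lemma Cmod_csum n f : Cmod (csum n f) <= rsum n (fun k => Cmod (f k)).
Proof.
  induction n; simpl.
  - unfold Cmod, C0, RC; simpl. replace (0*(0*1)+0*(0*1)) with 0 by ring. rewrite sqrt_0. lra.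
  - eapply Rle_trans. apply Cmod_triangle. lra.
Qed.

Lemma Cmod_sq z : Cmod z ^ 2 = fst (Cmul z (Cconj z)).
Proof.
  unfold Cmod. rewrite pow2_sqrt.
  - destruct z; unfold Cmul, Cconj; simpl. ring.
  - nra.
Qed.

Lemma fst_mul_conj_nonneg z : 0 <= fst (Cmul z (Cconj z)).
Proof. rewrite <- Cmod_sq. nra. Qed.

Definition madd (A B : Mat) : Mat := fun i j => Cadd (A i j) (B i j).
Definition msc (a : C) (A : Mat) : Mat := fun i j => Cmul a (A i j).
Definition mcsum (m : nat) (F : nat -> Mat) : Mat := fun i j => csum m (fun k => F k i j).

Section MatN.
Variable n : nat.

Lemma mat_eq_refl A : mat_eq n A A. Proof. intros i j _ _; reflexivity. Qed.
Lemma mat_eq_sym A B : mat_eq n A B -> mat_eq n B A.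
Proof. intros H i j Hi Hj; symmetry; auto. Qed.
Lemma mat_eq_trans A B D : mat_eq n A B -> mat_eq n B D -> mat_eq n A D.
Proof. intros H1 H2 i j Hi Hj; rewrite H1; auto. Qed.
End MatN.

Add Parametric Relation (n : nat) : Mat (mat_eq n)
  reflexivity proved by (mat_eq_refl n)
  symmetry proved by (mat_eq_sym n)
  transitivity proved by (mat_eq_trans n) as mat_eq_rel.

Add Parametric Morphism (n : nat) : (mmul n) with signature
  mat_eq n ==> mat_eq n ==> mat_eq n as mmul_mor.
Proof.
  intros A A' HA B B' HB i j Hi Hj. unfold mmul. apply csum_ext. intros k Hk.
  rewrite HA, HB by auto. reflexivity.
Qed.

Add Parametric Morphism (n : nat) : adj with signature
  mat_eq n ==> mat_eq n as adj_mor.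
Proof. intros A A' HA i j Hi Hj. unfold adj. rewrite HA by auto. reflexivity. Qed.

Add Parametric Morphism (n : nat) : madd with signature
  mat_eq n ==> mat_eq n ==> mat_eq n as madd_mor.
Proof. intros A A' HA B B' HB i j Hi Hj. unfold madd. rewrite HA, HB by auto. reflexivity. Qed.

Add Parametric Morphism (n : nat) (a : C) : (msc a) with signature
  mat_eq n ==> mat_eq n as msc_mor.
Proof. intros A A' HA i j Hi Hj. unfold msc. rewrite HA by auto. reflexivity. Qed.

Add Parametric Morphism (n : nat) : (trace n) with signature
  mat_eq n ==> eq as trace_mor.
Proof. intros A A' HA. unfold trace. apply csum_ext. intros; apply HA; auto. Qed.

Section MatLemmas.
Variable n : nat.

Lemma mmul_assoc A B D : mat_eq n (mmul n (mmul n A B) D) (mmul n A (mmul n B D)).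
Proof.
  intros i j _ _. unfold mmul.
  rewrite <- (csum_ext n (fun k => csum n (fun l => Cmul (A i l) (Cmul (B l k) (D k j))))).
  2:{ intros k _. rewrite <- csum_mul_r. apply csum_ext. intros; ring. }
  rewrite csum_swap. apply csum_ext. intros l _. rewrite <- csum_mul_l. reflexivity.
Qed.

Lemma mmul_delta_l A : mat_eq n (mmul n delta A) A.
Proof.
  intros i j Hi Hj. unfold mmul. rewrite (csum_single n _ i Hi).
  - unfold delta. rewrite Nat.eqb_refl. unfold C1, RC. destruct (A i j); unfold Cmul; simpl; f_equal; ring.
  - intros k Hk Hne. unfold delta. replace (Nat.eqb i k) with false.
    + unfold C0, RC. destruct (A k j); unfold Cmul; simpl; f_equal; ring.
    + symmetry. apply Nat.eqb_neq. auto.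
Qed.

Lemma mmul_delta_r A : mat_eq n (mmul n A delta) A.
Proof.
  intros i j Hi Hj. unfold mmul. rewrite (csum_single n _ j Hj).
  - unfold delta. rewrite Nat.eqb_refl. unfold C1, RC. destruct (A i j); unfold Cmul; simpl; f_equal; ring.
  - intros k Hk Hne. unfold delta. replace (Nat.eqb k j) with false.
    + unfold C0, RC. destruct (A i k); unfold Cmul; simpl; f_equal; ring.
    + symmetry. apply Nat.eqb_neq. auto.
Qed.

Lemma Cconj_mul a b : Cconj (Cmul a b) = Cmul (Cconj a) (Cconj b).
Proof. destruct a, b; unfold Cconj, Cmul; simpl; f_equal; ring. Qed.
Lemma Cconj_conj a : Cconj (Cconj a) = a.
Proof. destruct a; unfold Cconj; simpl; f_equal; ring. Qed.

Lemma adj_mmul A B : mat_eq n (adj (mmul n A B)) (mmul n (adj B) (adj A)).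
Proof.
  intros i j _ _. unfold adj, mmul. rewrite csum_conj. apply csum_ext. intros.
  rewrite Cconj_mul. ring.
Qed.

Lemma adj_adj A : mat_eq n (adj (adj A)) A.
Proof. intros i j _ _. unfold adj. apply Cconj_conj. Qed.

Lemma trace_comm A B : trace n (mmul n A B) = trace n (mmul n B A).
Proof.
  unfold trace, mmul. rewrite csum_swap. apply csum_ext. intros. apply csum_ext. intros. ring.
Qed.

Lemma mmul_madd_l A B D : mat_eq n (mmul n (madd A B) D) (madd (mmul n A D) (mmul n B D)).
Proof.
  intros i j _ _. unfold mmul, madd. rewrite <- csum_add. apply csum_ext. intros; ring.
Qed.
Lemma mmul_madd_r A B D : mat_eq n (mmul n D (madd A B)) (madd (mmul n D A) (mmul n D B)).
Proof.
  intros i j _ _. unfold mmul, madd. rewrite <- csum_add. apply csum_ext. intros; ring.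
Qed.
Lemma mmul_msc_l a A B : mat_eq n (mmul n (msc a A) B) (msc a (mmul n A B)).
Proof.
  intros i j _ _. unfold mmul, msc. rewrite <- csum_mul_l. apply csum_ext. intros; ring.
Qed.
Lemma mmul_msc_r a A B : mat_eq n (mmul n A (msc a B)) (msc a (mmul n A B)).
Proof.
  intros i j _ _. unfold mmul, msc. rewrite <- csum_mul_l. apply csum_ext. intros; ring.
Qed.
Lemma mmul_mcsum_l m F A : mat_eq n (mmul n A (mcsum m F)) (mcsum m (fun k => mmul n A (F k))).
Proof.
  intros i j _ _. unfold mmul, mcsum.
  rewrite <- (csum_ext n (fun k => csum m (fun l => Cmul (A i k) (F l k j)))).
  2:{ intros. rewrite csum_mul_l. reflexivity. }
  apply csum_swap.
Qed.
Lemma mmul_mcsum_r m F A : mat_eq n (mmul n (mcsum m F) A) (mcsum m (fun k => mmul n (F k) A)).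
Proof.
  intros i j _ _. unfold mmul, mcsum.
  rewrite <- (csum_ext n (fun k => csum m (fun l => Cmul (F l i k) (A k j)))).
  2:{ intros. rewrite csum_mul_r. reflexivity. }
  apply csum_swap.
Qed.

Lemma mmul_diag_r A v i j : (j < n)%nat -> mmul n A (diag v) i j = Cmul (A i j) (v j).
Proof.
  intros Hj. unfold mmul. rewrite (csum_single n _ j Hj).
  - unfold diag. rewrite Nat.eqb_refl. reflexivity.
  - intros k Hk Hne. unfold diag. replace (Nat.eqb k j) with false by (symmetry; apply Nat.eqb_neq; auto).
    unfold C0, RC. destruct (A i k); unfold Cmul; simpl; f_equal; ring.
Qed.
Lemma mmul_diag_l A v i j : (i < n)%nat -> mmul n (diag v) A i j = Cmul (v i) (A i j).
Proof.
  intros Hi. unfold mmul. rewrite (csum_single n _ i Hi).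
  - unfold diag. rewrite Nat.eqb_refl. reflexivity.
  - intros k Hk Hne. unfold diag. replace (Nat.eqb i k) with false by (symmetry; apply Nat.eqb_neq; auto).
    unfold C0, RC. destruct (A k j); unfold Cmul; simpl; f_equal; ring.
Qed.
End MatLemmas.

Lemma delta_sum_l n j f : (j < n)%nat -> csum n (fun k => Cmul (delta k j) (f k)) = f j.
Proof.
  intros Hj. rewrite (csum_single n _ j Hj).
  - unfold delta. rewrite Nat.eqb_refl. ring.
  - intros k Hk Hne. unfold delta. replace (Nat.eqb k j) with false by (symmetry; apply Nat.eqb_neq; auto). ring.
Qed.
Lemma delta_sum_r n j f : (j < n)%nat -> csum n (fun k => Cmul (delta j k) (f k)) = f j.
Proof.
  intros Hj. rewrite (csum_single n _ j Hj).
  - unfold delta. rewrite Nat.eqb_refl. ring.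
  - intros k Hk Hne. unfold delta. replace (Nat.eqb j k) with false by (symmetry; apply Nat.eqb_neq; auto). ring.
Qed.

Lemma mcsum_ext n m F G : (forall k, (k < m)%nat -> mat_eq n (F k) (G k)) -> mat_eq n (mcsum m F) (mcsum m G).
Proof. intros H i j Hi Hj. unfold mcsum. apply csum_ext. intros. apply H; auto. Qed.

Section Main.
Variables (n : nat) (V HB gam : Mat) (eps : nat -> R) (g : nat -> R) (U : Op2) (En : nat -> R).
Let D := diag (fun k => RC (eps k)).
Let G := diag (fun k => RC (g k)).
Let HS := diag (fun i => RC (En i)).
Hypothesis HV1 : mat_eq n (mmul n V (adj V)) delta.
Hypothesis HV2 : mat_eq n (mmul n (adj V) V) delta.
Hypothesis HHB : mat_eq n HB (mmul n (mmul n V D) (adj V)).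
Hypothesis Hgam : mat_eq n gam (mmul n (mmul n V G) (adj V)).
Hypothesis HU1 : op2_eq 3 n (mmul2 3 n U (adj2 U)) delta2.
Hypothesis Hcomm : op2_eq 3 n (mmul2 3 n U (Htot HS HB)) (mmul2 3 n (Htot HS HB) U).

Definition P (i j : nat) : Mat := fun b c => U i b j c.
Definition W (i j : nat) : Mat := mmul n (mmul n (adj V) (P i j)) V.

Lemma D_eq : mat_eq n (mmul n (mmul n (adj V) HB) V) D.
Proof.
  rewrite HHB. rewrite !mmul_assoc. rewrite HV2, mmul_delta_r.
  rewrite <- mmul_assoc, HV2, mmul_delta_l. reflexivity.
Qed.

Lemma ladder_P i j : (i < 3)%nat -> (j < 3)%nat ->
  mat_eq n (madd (msc (RC (En j)) (P i j)) (mmul n (P i j) HB))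
           (madd (msc (RC (En i)) (P i j)) (mmul n HB (P i j))).
Proof.
  intros Hi Hj b c Hb Hc. pose proof (Hcomm i b j c Hi Hb Hj Hc) as H.
  unfold mmul2, Htot in H.
  rewrite (csum_ext 3 _ (fun k => Cmul (delta k j) (Cadd
      (csum n (fun c2 => Cmul (delta c2 c) (Cmul (U i b k c2) (RC (En k)))))
      (csum n (fun c2 => Cmul (U i b k c2) (HB c2 c)))))) in H.
  2:{ intros k _. rewrite <- csum_add, <- csum_mul_l. apply csum_ext. intros c2 _.
      unfold HS, diag, delta. destruct (Nat.eqb k j); ring. }
  match type of H with ?L = _ => set (LL := L) in H end.
  rewrite (csum_ext 3 _ (fun k => Cmul (delta i k) (Cadd
      (csum n (fun c2 => Cmul (delta b c2) (Cmul (RC (En k)) (U k c2 j c))))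
      (csum n (fun c2 => Cmul (HB b c2) (U k c2 j c)))))) in H.
  2:{ intros k _. rewrite <- csum_add, <- csum_mul_l. apply csum_ext. intros c2 _.
      unfold HS, diag, delta. destruct (Nat.eqb_spec i k); [subst|]; ring. }
  unfold LL in H. rewrite delta_sum_l, delta_sum_r, delta_sum_l, delta_sum_r in H by auto.
  unfold madd, msc, P, mmul. match type of H with ?L = ?R => transitivity L; [ring| rewrite H; ring] end.
Qed.

Lemma ladder_W i j : (i < 3)%nat -> (j < 3)%nat ->
  mat_eq n (madd (msc (RC (En j)) (W i j)) (mmul n (W i j) D))
           (madd (msc (RC (En i)) (W i j)) (mmul n D (W i j))).
Proof.
  intros Hi Hj.
  assert (K : forall X Y, mat_eq n X Y ->
     mat_eq n (mmul n (mmul n (adj V) X) V) (mmul n (mmul n (adj V) Y) V)).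
  { intros X Y HXY. rewrite HXY. reflexivity. }
  pose proof (K _ _ (ladder_P i j Hi Hj)) as H.
  rewrite !mmul_madd_r, !mmul_madd_l, !mmul_msc_r, !mmul_msc_l in H.
  unfold W. rewrite <- D_eq.
  assert (E1 : mat_eq n (mmul n (mmul n (mmul n (adj V) (P i j)) V) (mmul n (mmul n (adj V) HB) V))
                   (mmul n (mmul n (adj V) (mmul n (P i j) HB)) V)).
  { rewrite !mmul_assoc. rewrite <- (mmul_assoc n V (adj V)), HV1, mmul_delta_l. reflexivity. }
  assert (E2 : mat_eq n (mmul n (mmul n (mmul n (adj V) HB) V) (mmul n (mmul n (adj V) (P i j)) V))
                   (mmul n (mmul n (adj V) (mmul n HB (P i j))) V)).
  { rewrite !mmul_assoc. rewrite <- (mmul_assoc n V (adj V)), HV1, mmul_delta_l. reflexivity. }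
  rewrite E1, E2. exact H.
Qed.

Lemma W_zero i j b c : (i < 3)%nat -> (j < 3)%nat -> (b < n)%nat -> (c < n)%nat ->
  En j + eps c <> En i + eps b -> W i j b c = C0.
Proof.
  intros Hi Hj Hb Hc Hne. pose proof (ladder_W i j Hi Hj b c Hb Hc) as H.
  unfold madd, msc in H. unfold D in H. rewrite mmul_diag_r, mmul_diag_l in H by auto.
  destruct (W i j b c) as [x y]. unfold Cadd, Cmul, RC, C0 in *; simpl in *.
  injection H; intros H2 H1.
  assert (x * (En j + eps c - (En i + eps b)) = 0) by lra.
  assert (y * (En j + eps c - (En i + eps b)) = 0) by lra.
  apply Rmult_integral in H0. apply Rmult_integral in H3.
  destruct H0, H3; try lra. subst. reflexivity.
Qed.

Lemma row_norm i b : (i < 3)%nat -> (b < n)%nat ->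
  csum 3 (fun j => mmul n (W i j) (adj (W i j)) b b) = C1.
Proof.
  intros Hi Hb.
  assert (E : mat_eq n (mcsum 3 (fun j => mmul n (W i j) (adj (W i j)))) delta).
  { rewrite (mcsum_ext n 3 _ (fun j => mmul n (mmul n (adj V) (mmul n (P i j) (adj (P i j)))) V)).
    2:{ intros k _. unfold W. rewrite !adj_mmul, adj_adj. rewrite !mmul_assoc.
        rewrite <- (mmul_assoc n V (adj V)), HV1, mmul_delta_l. reflexivity. }
    rewrite <- mmul_mcsum_r, <- mmul_mcsum_l.
    assert (E2 : mat_eq n (mcsum 3 (fun k => mmul n (P i k) (adj (P i k)))) delta).
    { intros b1 b2 Hb1 Hb2. pose proof (HU1 i b1 i b2 Hi Hb1 Hi Hb2) as H.
      unfold mmul2 in H. unfold mcsum, mmul, P, adj. unfold adj2 in H. rewrite H.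
      unfold delta2, delta at 1. rewrite Nat.eqb_refl. ring. }
    rewrite E2, mmul_delta_r, HV2. reflexivity. }
  pose proof (E b b Hb Hb) as E'. unfold mcsum, delta in E'. rewrite Nat.eqb_refl in E'. exact E'.
Qed.

Lemma row_norm_R i j b : (i < 3)%nat -> (j < 3)%nat -> (b < n)%nat ->
  rsum n (fun c => Cmod (W i j b c) ^ 2) <= 1.
Proof.
  intros Hi Hj Hb. pose proof (row_norm i b Hi Hb) as H.
  apply (f_equal fst) in H. simpl in H.
  assert (F : forall k, fst (mmul n (W i k) (adj (W i k)) b b) = rsum n (fun c => Cmod (W i k b c) ^ 2)).
  { intros k. unfold mmul, adj. rewrite fst_csum. apply rsum_ext. intros. rewrite Cmod_sq. reflexivity. }
  rewrite !F in H.
  assert (N : forall k, 0 <= rsum n (fun c => Cmod (W i k b c) ^ 2)).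
  { intros k. apply rsum_nonneg. intros. nra. }
  pose proof (N 0%nat). pose proof (N 1%nat). pose proof (N 2%nat).
  destruct j as [|[|[|j]]]; try lia; lra.
Qed.

Lemma trace_W k l : trace n (mmul n (mmul n (P 1%nat k) gam) (adj (P 2%nat l))) =
  trace n (mmul n (mmul n (W 1%nat k) G) (adj (W 2%nat l))).
Proof.
  unfold W. rewrite !adj_mmul, adj_adj. rewrite Hgam.
  rewrite !mmul_assoc. rewrite (trace_comm n (adj V)). rewrite !mmul_assoc.
  rewrite HV1, mmul_delta_r. reflexivity.
Qed.

Lemma ptrace_formula rho :
  ptraceB n (mmul2 3 n (mmul2 3 n U (tensor rho gam)) (adj2 U)) 1%nat 2%nat =
  csum 3 (fun k => csum 3 (fun l => Cmul (rho k l) (trace n (mmul n (mmul n (P 1%nat k) gam) (adj (P 2%nat l)))))).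
Proof.
  set (f := fun b k l c2 c1 => Cmul (Cmul (U 1%nat b k c1) (Cmul (rho k l) (gam c1 c2))) (Cconj (U 2%nat b l c2))).
  transitivity (csum n (fun b => csum 3 (fun k => csum 3 (fun l => csum n (fun c2 => csum n (fun c1 => f b k l c2 c1)))))).
  - unfold ptraceB, mmul2, tensor, adj2. apply csum_ext. intros b _.
    transitivity (csum 3 (fun l => csum 3 (fun k => csum n (fun c2 => csum n (fun c1 => f b k l c2 c1))))).
    + apply csum_ext. intros l _. rewrite csum_swap. apply csum_ext. intros c2 _.
      rewrite <- csum_mul_r. apply csum_ext. intros k _. rewrite <- csum_mul_r. reflexivity.
    + apply csum_swap.
  - transitivity (csum 3 (fun k => csum 3 (fun l => csum n (fun b => csum n (fun c2 => csum n (fun c1 => f b k l c2 c1)))))).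
    + rewrite csum_swap. apply csum_ext. intros k _. apply csum_swap.
    + apply csum_ext. intros k _. apply csum_ext. intros l _.
      unfold trace, mmul, adj. rewrite <- csum_mul_l. apply csum_ext. intros b _.
      rewrite <- csum_mul_l. apply csum_ext. intros c2 _.
      rewrite <- csum_mul_r, <- csum_mul_l. apply csum_ext. intros c1 _. unfold f, P. ring.
Qed.

Lemma trace_WG k l : trace n (mmul n (mmul n (W 1%nat k) G) (adj (W 2%nat l))) =
  csum n (fun b => csum n (fun c => Cmul (Cmul (W 1%nat k b c) (RC (g c))) (Cconj (W 2%nat l b c)))).
Proof.
  unfold trace. apply csum_ext. intros b Hb. unfold mmul at 1. apply csum_ext. intros c Hc.
  unfold G. rewrite mmul_diag_r by auto. reflexivity.
Qed.

Lemma trace_zero k l : (k < 3)%nat -> (l < 3)%nat -> En l - En k <> En 2%nat - En 1%nat ->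
  trace n (mmul n (mmul n (W 1%nat k) G) (adj (W 2%nat l))) = C0.
Proof.
  intros Hk Hl Hne. rewrite trace_WG. apply csum_zero. intros b Hb. apply csum_zero. intros c Hc.
  destruct (Req_dec (En k + eps c) (En 1%nat + eps b)) as [E|E].
  - rewrite (W_zero 2%nat l b c) by (auto; lra). unfold Cconj, C0, RC; simpl.
    destruct (W 1%nat k b c); unfold Cmul; simpl. f_equal; ring.
  - rewrite (W_zero 1%nat k b c) by (auto; lra). unfold C0, RC, Cmul; simpl. f_equal; ring.
Qed.

Lemma Cmod_RC x : 0 <= x -> Cmod (RC x) = x.
Proof. intros H. unfold Cmod, RC; simpl. replace (x * (x * 1) + 0 * (0 * 1)) with (x * x) by ring. apply sqrt_square; auto. Qed.

Lemma Cmod_C0 : Cmod C0 = 0.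
Proof. apply Cmod_RC. lra. Qed.

Lemma bound (beta DE : R) : En 1%nat - En 0%nat = DE ->
  (forall k, (k < n)%nat -> 0 <= g k) -> rsum n g = 1 ->
  (forall b c, (b < n)%nat -> (c < n)%nat -> eps c = eps b + DE -> g c = exp (- beta * DE) * g b) ->
  Cmod (trace n (mmul n (mmul n (W 1%nat 0%nat) G) (adj (W 2%nat 1%nat)))) <= exp (- beta * DE).
Proof.
  intros HE Hg Hsum Hgc. rewrite trace_WG.
  pose proof (exp_pos (- beta * DE)) as Hep. set (e := exp (- beta * DE)) in *.
  eapply Rle_trans; [apply Cmod_csum|].
  apply Rle_trans with (rsum n (fun b => e * g b)).
  2:{ rewrite rsum_scal, Hsum. lra. }
  apply rsum_le. intros b Hb.
  eapply Rle_trans; [apply Cmod_csum|].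
  apply Rle_trans with (rsum n (fun c => (e * g b / 2) *
     (Cmod (W 1%nat 0%nat b c) ^ 2 + Cmod (W 2%nat 1%nat b c) ^ 2))).
  - apply rsum_le. intros c Hc.
    rewrite !Cmod_mult, Cmod_conj.
    pose proof (Hg b Hb). pose proof (Hg c Hc).
    pose proof (Cmod_ge_0 (W 1%nat 0%nat b c)). pose proof (Cmod_ge_0 (W 2%nat 1%nat b c)).
    assert (0 <= e * g b) by nra.
    destruct (Req_dec (En 0%nat + eps c) (En 1%nat + eps b)) as [E|E].
    + rewrite Cmod_RC by auto. rewrite (Hgc b c Hb Hc) by lra.
      set (x := Cmod (W 1%nat 0%nat b c)) in *. set (y := Cmod (W 2%nat 1%nat b c)) in *.
      assert (0 <= e * g b * (x - y) ^ 2) by (apply Rmult_le_pos; [auto | apply pow2_ge_0]). nra.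
    + rewrite (W_zero 1%nat 0%nat b c) by (auto; lra). rewrite Cmod_C0.
      assert (0 <= Cmod (W 2%nat 1%nat b c) ^ 2) by nra. nra.
  - rewrite rsum_scal, rsum_add.
    pose proof (row_norm_R 1%nat 0%nat b ltac:(lia) ltac:(lia) Hb).
    pose proof (row_norm_R 2%nat 1%nat b ltac:(lia) ltac:(lia) Hb).
    pose proof (Hg b Hb). assert (0 <= e * g b) by nra. nra.
Qed.
End Main.

Theorem mainTheorem17 :
  forall (beta E0 E1 E2 DE : R) (T : Mat -> Mat) (rho : Mat),
    0 < beta ->
    0 < DE ->
    E2 - E1 = DE ->
    E1 - E0 = DE ->
    density 3 rho ->
    rho 1%nat 2%nat = C0 ->
    thermal_operation 3 beta (H3 E0 E1 E2) T ->
    Cmod (T rho 1%nat 2%nat) <= exp (- beta * DE) * Cmod (rho 0%nat 1%nat).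
Proof.
  intros beta E0 E1 E2 DE T rho Hb HDE H21 H10 _ H12 HT.
  destruct HT as (dB & HB & gB & U & HdB & _ & Hgibbs & [HU1 _] & Hcomm & HTr).
  destruct Hgibbs as (V & eps & [HV1 HV2] & HHB & Hgam).
  set (Z := rsum dB (fun l => exp (- beta * eps l))) in *.
  set (g := fun k => exp (- beta * eps k) / Z).
  set (En := fun i : nat => match i with 0%nat => E0 | 1%nat => E1 | _ => E2 end).
  change (H3 E0 E1 E2) with (diag (fun i => RC (En i))) in Hcomm.
  change (mat_eq dB gB (mmul dB (mmul dB V (diag (fun k => RC (g k)))) (adj V))) in Hgam.
  pose proof (trace_zero dB V HB eps g U En HV1 HV2 HHB Hcomm) as TZ.
  pose proof (trace_W dB V gB g U HV1 Hgam) as TW.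
  assert (HZ : 0 < Z).
  { apply rsum_pos; auto. intros; apply exp_pos. }
  assert (Heq : T rho 1%nat 2%nat = Cmul (rho 0%nat 1%nat)
     (trace dB (mmul dB (mmul dB (W dB V U 1 0) (diag (fun k => RC (g k)))) (adj (W dB V U 2 1))))).
  { rewrite HTr by lia. rewrite ptrace_formula. cbn [csum]. rewrite !TW.
    rewrite (TZ 0%nat 0%nat), (TZ 0%nat 2%nat), (TZ 1%nat 0%nat), (TZ 1%nat 1%nat),
      (TZ 2%nat 0%nat), (TZ 2%nat 1%nat), (TZ 2%nat 2%nat) by (try lia; simpl; lra).
    rewrite H12. ring. }
  rewrite Heq, Cmod_mult, (Rmult_comm (exp _)).
  apply Rmult_le_compat_l; [apply Cmod_ge_0|].
  apply (bound dB V HB eps g U En HV1 HV2 HHB HU1 Hcomm beta DE).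
  - simpl. lra.
  - intros k _. unfold g. pose proof (exp_pos (- beta * eps k)). apply Rlt_le, Rdiv_lt_0_compat; auto.
  - unfold g. unfold Rdiv. rewrite (rsum_ext dB _ (fun k => / Z * exp (- beta * eps k))) by (intros; ring).
    rewrite rsum_scal. fold Z. field. lra.
  - intros b c _ _ E. unfold g. rewrite E.
    replace (- beta * (eps b + DE)) with (- beta * DE + - beta * eps b) by ring.
    rewrite exp_plus. field. lra.
Qed.
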